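(* Let $L$ be a Jordan subalgebra of $\mathrm{Sym}(p)$ and consider the Gaussian linear concentration model on $L$ with data $x^1,\dots,x^n$ and $W=n^{-1}\sum_ix^i(x^i)^\top$. Then $I_p\in L$, and if $\Pi_L(W)$ is invertible, the matrix $\{\Pi_L(W)\}^{-1}$ lies in $L$, it is the unique invertible solution $K\in L$ of the likelihood equation $\Pi_L(W)=\Pi_L(K^{-1})$ (so the MLE is $\hat K=\{\Pi_L(W)\}^{-1}$), and it solves the score matching equation $\Pi_L(K\circ W)=I_p$; in particular, when the score matching estimator $\check K$ exists it satisfies $\check K=\hat K=\{\Pi_L(W)\}^{-1}$.
   Context: $\mathrm{Sym}(p)$: real symmetric $p\times p$ matrices with trace inner product; $\mathrm{Sym}_+(p)$: positive definite ones; a Jordan subalgebra is a linear subspace $L$ closed under the Jordan product $A\circ B=(AB^\top+BA^\top)/2$ (equivalently $L\cap\mathrm{Sym}_+(p)$ is closed under inversion) and containing $L\cap\mathrm{Sym}_+(p)\neq\emptyset$; $\Pi_L$ is orthogonal projection onto $L$. The Gaussian linear concentration model is $\{N_p(0,K^{-1}):K\in L\cap\mathrm{Sym}_+(p)\}$; its log-likelihood is proportional to $\log\det K-\operatorname{tr}(KW)$. The score matching estimator (SME) $\check K$ is said to exist if the linear equation $\Pi_L(K\circ W)=I_p$ has a unique solution $K\in L$, which is then $\check K$ (no positive definiteness required). *)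

(* Defs.v *)
From HB Require Import structures.
From mathcomp Require Import all_boot all_order all_algebra.
Set Implicit Arguments. Unset Strict Implicit. Unset Printing Implicit Defensive.
Import Order.TTheory GRing.Theory Num.Theory.
Local Open Scope ring_scope.

Definition is_sym (R : realFieldType) (p : nat) (A : 'M[R]_p) : Prop := A^T = A.

Definition is_posdef (R : realFieldType) (p : nat) (A : 'M[R]_p) : Prop :=
  is_sym A /\ forall x : 'cV[R]_p, x != 0 -> 0 < (x^T *m A *m x) 0 0.

Definition tr_inner (R : realFieldType) (p : nat) (A B : 'M[R]_p) : R := \tr (A *m B^T).

Definition jprod (R : realFieldType) (p : nat) (A B : 'M[R]_p) : 'M[R]_p :=
  2^-1 *: (A *m B^T + B *m A^T).

Definition is_sym_subspace (R : realFieldType) (p : nat) (L : 'M[R]_p -> Prop) : Prop :=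
  [/\ L 0,
      (forall A B, L A -> L B -> L (A + B)),
      (forall (c : R) A, L A -> L (c *: A)) &
      (forall A, L A -> is_sym A)].

Definition is_jordan_subalgebra (R : realFieldType) (p : nat) (L : 'M[R]_p -> Prop) : Prop :=
  [/\ is_sym_subspace L,
      (forall A B, L A -> L B -> L (jprod A B)) &
      (exists K, L K /\ is_posdef K)].

Definition is_orth_proj (R : realFieldType) (p : nat) (L : 'M[R]_p -> Prop)
    (Pi : 'M[R]_p -> 'M[R]_p) : Prop :=
  forall A, L (Pi A) /\ (forall B, L B -> tr_inner (A - Pi A) B = 0).

Definition sample_W (R : realFieldType) (p n : nat) (x : 'I_n -> 'cV[R]_p) : 'M[R]_p :=
  (n%:R)^-1 *: \sum_(i < n) (x i *m (x i)^T).

Definition sm_solution (R : realFieldType) (p : nat) (L : 'M[R]_p -> Prop)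
    (Pi : 'M[R]_p -> 'M[R]_p) (W K : 'M[R]_p) : Prop :=
  L K /\ Pi (jprod K W) = 1%:M.

Definition SME_exists (R : realFieldType) (p : nat) (L : 'M[R]_p -> Prop)
    (Pi : 'M[R]_p -> 'M[R]_p) (W : 'M[R]_p) : Prop :=
  exists! K, sm_solution L Pi W K.

(* Main.v *)
Require Import Defs.
From HB Require Import structures.
From mathcomp Require Import all_boot all_order all_algebra.
Import Order.TTheory GRing.Theory Num.Theory.
Local Open Scope ring_scope.

Section Aux.
Variables (R : realFieldType) (p : nat) (L : 'M[R]_p -> Prop).
Hypothesis HL : is_sym_subspace L.

Lemma L0 : L 0. Proof. by case: HL. Qed.
Lemma LD A B : L A -> L B -> L (A + B). Proof. by case: HL => _ H _ _; apply: H. Qed.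
Lemma LZ c A : L A -> L (c *: A). Proof. by case: HL => _ _ H _; apply: H. Qed.
Lemma Lsym A : L A -> A^T = A. Proof. by case: HL => _ _ _ H; apply: H. Qed.
Lemma LN A : L A -> L (- A). Proof. by move=> h; rewrite -scaleN1r; apply: LZ. Qed.
Lemma LB A B : L A -> L B -> L (A - B). Proof. by move=> ha hb; apply: LD => //; apply: LN. Qed.
Lemma Lsum (I : finType) (F : I -> 'M[R]_p) : (forall i, L (F i)) -> L (\sum_i F i).
Proof. by move=> h; apply: big_ind => //; [exact: L0 | exact: LD]. Qed.

Lemma half2 (X : 'M[R]_p) : 2^-1 *: (X + X) = X.
Proof. by rewrite -mulr2n -scaler_nat scalerA mulVf ?pnatr_eq0 // scale1r. Qed.

Lemma jprod_sym (A B : 'M[R]_p) : A^T = A -> B^T = B -> jprod A B = 2^-1 *: (A *m B + B *m A).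
Proof. by move=> ha hb; rewrite /jprod ha hb. Qed.

Hypothesis HJ : forall A B, L A -> L B -> L (jprod A B).

Lemma Lpow A : L A -> forall k, L (A ^+ k.+1).
Proof.
move=> hA; elim=> [|k IH]; first by rewrite expr1.
have -> : A ^+ k.+2 = jprod A (A ^+ k.+1).
  rewrite jprod_sym ?Lsym // !mulmxE -exprS -exprSr; by rewrite half2.
by apply: HJ.
Qed.

Lemma tr_innerB (A B C : 'M[R]_p) : tr_inner (A - B) C = tr_inner A C - tr_inner B C.
Proof. by rewrite /tr_inner mulmxBl raddfB. Qed.

Lemma tr_inner0 (C : 'M[R]_p) : tr_inner 0 C = 0.
Proof. by rewrite /tr_inner mul0mx raddf0. Qed.

Lemma tr_inner_eq0 (D : 'M[R]_p) : tr_inner D D = 0 -> D = 0.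
Proof.
have E : tr_inner D D = \sum_i \sum_j D i j ^+ 2.
  rewrite /tr_inner /mxtrace; apply: eq_bigr => i _; rewrite mxE.
  by apply: eq_bigr => j _; rewrite mxE expr2.
rewrite E => H; apply/matrixP => i j; rewrite mxE.
have Hi : \sum_j D i j ^+ 2 = 0.
  by apply: (psumr_eq0P _ H) => // k _; apply: sumr_ge0 => l _; apply: sqr_ge0.
have Hj : D i j ^+ 2 = 0.
  by apply: (psumr_eq0P _ Hi) => // k _; apply: sqr_ge0.
by apply/eqP; rewrite -sqrf_eq0 Hj.
Qed.

Variable Pi : 'M[R]_p -> 'M[R]_p.
Hypothesis HP : is_orth_proj L Pi.

Lemma proj_uniq A Y : L Y -> (forall B, L B -> tr_inner (A - Y) B = 0) -> Pi A = Y.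
Proof.
move=> hY hB; have [hPA hPB] := HP A.
apply: subr0_eq; apply: tr_inner_eq0.
have hD : L (Pi A - Y) by apply: LB.
have E : Pi A - Y = (A - Y) - (A - Pi A).
  by rewrite opprB [in RHS]addrC addrA subrK.
by rewrite {1}E tr_innerB hB // hPB // subrr.
Qed.

Lemma proj_id B : L B -> Pi B = B.
Proof. by move=> hB; apply: proj_uniq => // C _; rewrite subrr tr_inner0. Qed.

Lemma jordan_adj (A B V : 'M[R]_p) : L A -> L B -> V^T = V ->
  tr_inner (jprod A V) B = tr_inner V (jprod A B).
Proof.
move=> hA hB hV.
rewrite /tr_inner (Lsym _ (HJ _ _ hA hB)) (Lsym _ hB) !jprod_sym ?(Lsym _ hA) ?(Lsym _ hB) //.
rewrite -scalemxAl -scalemxAr !linearZ /=; congr (_ * _).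
rewrite mulmxDl mulmxDr !mxtraceD addrC.
have -> : \tr (A *m V *m B) = \tr (V *m B *m A) by rewrite -mulmxA mxtrace_mulC.
by rewrite !mulmxA.
Qed.

Lemma proj_jprod (A W : 'M[R]_p) : L A -> W^T = W -> Pi (jprod A W) = jprod A (Pi W).
Proof.
move=> hA hW; have [hPW hPWo] := HP W.
apply: proj_uniq; first exact: HJ.
move=> B hB; rewrite tr_innerB jordan_adj // jordan_adj ?(Lsym _ hPW) // -tr_innerB.
by apply: hPWo; exact: HJ.
Qed.

End Aux.

Lemma CH_decomp (R : fieldType) n (A : 'M[R]_n.+1) : A \in unitmx ->
  exists c0 : R, exists c : 'I_n.+1 -> R,
    c0 != 0 /\ c0%:M + \sum_i c i *: A ^+ i.+1 = 0.
Proof.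
move=> hU; have H0 := Cayley_Hamilton A.
rewrite -[char_poly A]coefK poly_def size_char_poly rmorph_sum in H0.
rewrite big_ord_recl /= in H0.
exists (char_poly A)`_0, (fun i : 'I_n.+1 => (char_poly A)`_i.+1); split.
  rewrite char_poly_det mulf_neq0 ?signr_eq0 //.
  by rewrite unitmxE unitfE in hU.
apply: etrans H0; rewrite horner_mxZ expr0 rmorph1 scalemx1; congr (_ + _).
apply: eq_bigr => i _; rewrite horner_mxZ rmorphXn /= horner_mx_X.
by rewrite /bump /=.
Qed.

Lemma posdef_unit (R : realFieldType) p (K : 'M[R]_p) : is_posdef K -> K \in unitmx.
Proof.
case=> hs hpos; rewrite unitmxE unitfE; apply/negP => /det0P [v v0 vK].
have := hpos v^T; rewrite trmx_eq0 v0 trmxK => /(_ isT).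
by rewrite vK mul0mx mxE ltxx.
Qed.

Lemma M0_eq (R : realFieldType) (A B : 'M[R]_0) : A = B.
Proof. by apply/matrixP => [[]]. Qed.

Lemma Lone (R : realFieldType) p (L : 'M[R]_p -> Prop) :
  is_sym_subspace L -> (forall A B, L A -> L B -> L (jprod A B)) ->
  forall A, L A -> A \in unitmx -> L 1%:M.
Proof.
case: p L => [|n] L HL HJ A hA hU; first by rewrite (M0_eq _ 1%:M 0); apply: L0.
have [c0 [c [c0n H]]] := CH_decomp _ _ _ hU.
have hS : \sum_i c i *: A ^+ i.+1 = - c0%:M.
  by apply/eqP; rewrite -addr_eq0 addrC H.
have hL : L (- c0%:M).
  by rewrite -hS; apply: Lsum => // i; apply: LZ => //; apply: Lpow.
have := @LZ _ _ _ HL (- c0^-1) _ hL.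
by rewrite scalerN scaleNr opprK scale_scalar_mx mulVf.
Qed.

Lemma Linv (R : realFieldType) p (L : 'M[R]_p -> Prop) :
  is_sym_subspace L -> (forall A B, L A -> L B -> L (jprod A B)) -> L 1%:M ->
  forall A, L A -> A \in unitmx -> L (invmx A).
Proof.
case: p L => [|n] L HL HJ L1 A hA hU; first by rewrite (M0_eq _ (invmx A) 0); apply: L0.
have [c0 [c [c0n H]]] := CH_decomp _ _ _ hU.
set B := \sum_i c i *: A ^+ i.
have hAB : A *m B = - c0%:M.
  apply/eqP; rewrite -addr_eq0 addrC -{}H /B mulmx_sumr; apply/eqP; congr (_ + _).
  by apply: eq_bigr => i _; rewrite -scalemxAr mulmxE exprS.
have hB : B = - c0 *: invmx A.
  by rewrite -[B]mul1mx -(mulVmx hU) -mulmxA hAB mulmxN mul_mx_scalar scaleNr.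
have -> : invmx A = (- c0)^-1 *: B by rewrite hB scalerA mulVf ?oppr_eq0 // scale1r.
apply: LZ => //; apply: Lsum => // i; apply: LZ => //.
by case: (nat_of_ord i) => [|k]; [rewrite expr0 | apply: Lpow].
Qed.

Theorem theorem1 (R : realFieldType) (p n : nat)
    (L : 'M[R]_p -> Prop) (Pi : 'M[R]_p -> 'M[R]_p) (x : 'I_n -> 'cV[R]_p) :
  is_jordan_subalgebra L ->
  is_orth_proj L Pi ->
  (0 < n)%N ->
  let W := sample_W x in
  L 1%:M /\
  (Pi W \in unitmx ->
   let Khat := invmx (Pi W) in
   [/\ L Khat,
       Khat \in unitmx /\ Pi W = Pi (invmx Khat),
       (forall K, L K -> K \in unitmx -> Pi W = Pi (invmx K) -> K = Khat),
       sm_solution L Pi W Khat &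
       (SME_exists L Pi W -> forall K, sm_solution L Pi W K -> K = Khat)]).
Proof.
move=> [HL HJ [K0 [hK0 pdK0]]] hP _ W.
have hsymW : W^T = W.
  rewrite /W /sample_W linearZ /= raddf_sum /=; congr (_ *: _).
  by apply: eq_bigr => i _; rewrite trmx_mul trmxK.
have L1 : L 1%:M := @Lone _ _ _ HL HJ _ hK0 (posdef_unit _ _ _ pdK0).
split => // hU Khat.
have hPW : L (Pi W) by case: (hP W).
have hKhat : L Khat := @Linv _ _ _ HL HJ L1 _ hPW hU.
have hKU : Khat \in unitmx by rewrite unitmx_inv.
have sol : sm_solution L Pi W Khat.
  split => //; rewrite (@proj_jprod _ _ _ HL HJ _ hP) // jprod_sym ?(@Lsym _ _ _ HL _ hKhat) ?(@Lsym _ _ _ HL _ hPW) //.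
  by rewrite mulVmx ?mulmxV // half2.
split => //.
- by split => //; rewrite /Khat invmxK (@proj_id _ _ _ HL _ hP _ hPW).
- move=> K hK hKu; rewrite (@proj_id _ _ _ HL _ hP _ (@Linv _ _ _ HL HJ L1 _ hK hKu)) => hE.
  by rewrite /Khat hE invmxK.
- move=> [K1 [s1 u1]] K sK; by rewrite -(u1 _ sK) (u1 _ sol).
Qed.
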